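(* Let $g:\{0,1,2,3\}^*\to\{0,1,2,3\}^*$ be the morphism $g(0)=01$, $g(1)=20$, $g(2)=23$, $g(3)=02$, and $\tau$ the coding $\tau(0)=2$, $\tau(1)=1$, $\tau(2)=0$, $\tau(3)=1$; let $\mathbf{vtm}=\tau(g^\omega(0))=2102012101202102012021012102012\cdots$ (an infinite word over $\{0,1,2\}$). Let $\sigma:\{0,1,2\}^*\to\{0,1\}^*$ be the morphism $\sigma(0)=00011001011000111001011001110001011100101100010111$, $\sigma(1)=00011001011000101110010110011100010110001110010111$, $\sigma(2)=00011001011000101110010110001110010111000101100111$. Then $\sigma(\mathbf{vtm})$ is a $2$-automatic word containing only three distinct squares, and it is generated by a $2$-automaton with $109$ states (so it has weight $2\cdot 109=218$).
   Context: A square is a nonempty word $xx$; ''containing'' means as a factor. $g^\omega(0)$ denotes the infinite fixed point of $g$ starting with $0$. An infinite word is $k$-automatic if it is generated by a $k$-automaton (DFAO), i.e. a deterministic finite automaton with output which, given the base-$k$ representation of $n$ (most significant digit first), outputs the $n$th letter; equivalently, it is the image under a coding of a fixed point of a $k$-uniform morphism. The weight of a $k$-automatic word generated by a $k$-automaton with $s$ states (equivalently, the weight of the corresponding $k$-uniform morphism on $s$ letters) is $k\cdot s$. *)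

(* Defs.v *)
From mathcomp Require Import all_boot.
Set Implicit Arguments. Unset Strict Implicit. Unset Printing Implicit Defensive.

Definition word := nat -> nat.

Definition morph_apply (h : nat -> seq nat) (u : seq nat) : seq nat :=
  flatten (map h u).

(* g^omega(a), for a prolongable morphism with |h(b)| >= 2 for every letter:
   the n-th letter of the limit of h^k(a) is the n-th letter of h^(n+1)(a). *)
Definition fixpt (h : nat -> seq nat) (a : nat) : word :=
  fun n => nth 0 (iter n.+1 (morph_apply h) [:: a]) n.

(* image of an infinite word under a non-erasing morphism: the n-th letter is
   read off the image of the prefix of length n+1. *)
Definition morph_inf (h : nat -> seq nat) (w : word) : word :=
  fun n => nth 0 (morph_apply h (mkseq w n.+1)) n.

Definition g (a : nat) : seq nat :=
  match a with
  | 0 => [:: 0; 1]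
  | 1 => [:: 2; 0]
  | 2 => [:: 2; 3]
  | _ => [:: 0; 2]
  end.

Definition tau (a : nat) : nat :=
  match a with 0 => 2 | 1 => 1 | 2 => 0 | _ => 1 end.

Definition vtm : word := fun n => tau (fixpt g 0 n).

Definition sigma (a : nat) : seq nat :=
  match a with
  | 0 => [:: 0; 0; 0; 1; 1; 0; 0; 1; 0; 1; 1; 0; 0; 0; 1; 1; 1; 0; 0; 1; 0; 1; 1; 0; 0; 1; 1; 1; 0; 0; 0; 1; 0; 1; 1; 1; 0; 0; 1; 0; 1; 1; 0; 0; 0; 1; 0; 1; 1; 1]
  | 1 => [:: 0; 0; 0; 1; 1; 0; 0; 1; 0; 1; 1; 0; 0; 0; 1; 0; 1; 1; 1; 0; 0; 1; 0; 1; 1; 0; 0; 1; 1; 1; 0; 0; 0; 1; 0; 1; 1; 0; 0; 0; 1; 1; 1; 0; 0; 1; 0; 1; 1; 1]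
  | _ => [:: 0; 0; 0; 1; 1; 0; 0; 1; 0; 1; 1; 0; 0; 0; 1; 0; 1; 1; 1; 0; 0; 1; 0; 1; 1; 0; 0; 0; 1; 1; 1; 0; 0; 1; 0; 1; 1; 1; 0; 0; 0; 1; 0; 1; 1; 0; 0; 1; 1; 1]
  end.

Definition factor_of (u : seq nat) (w : word) : Prop :=
  exists i, forall j, j < size u -> w (i + j) = nth 0 u j.

Definition is_square (u : seq nat) : Prop :=
  exists x : seq nat, x != [::] /\ u = x ++ x.

(* the canonical base-k representation of n, most significant digit first;
   the representation of 0 is the empty word *)
Definition base_repr (k n : nat) : seq nat :=
  if n == 0 then [::]
  else rev [seq (n %/ k ^ i) %% k | i <- iota 0 (trunc_log k n).+1].

(* Only digits < k are ever read. *)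
Definition generated_by_DFAO (k s : nat) (w : word) : Prop :=
  exists (q0 : 'I_s) (delta : 'I_s -> nat -> 'I_s) (out : 'I_s -> nat),
    forall n, w n = out (foldl delta q0 (base_repr k n)).

Definition automatic (k : nat) (w : word) : Prop :=
  exists s, generated_by_DFAO k s w.

(* Main.v *)
Require Import Defs.
From mathcomp Require Import all_boot zify.
Set Implicit Arguments. Unset Strict Implicit. Unset Printing Implicit Defensive.
Module Aux.

Lemma size_morph (h : nat -> seq nat) k X :
  (forall a, size (h a) = k) -> size (morph_apply h X) = k * size X.
Proof.
move=> hk; elim: X => [|x X IH] /=; first by rewrite muln0.
rewrite /morph_apply /= size_cat hk -/(morph_apply h X) IH; lia.
Qed.

Lemma morph_cat h X Y : morph_apply h (X ++ Y) = morph_apply h X ++ morph_apply h Y.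
Proof. by rewrite /morph_apply map_cat flatten_cat. Qed.

Lemma nth_flatten_unif (h : nat -> seq nat) k (X : seq nat) n r :
  (forall a, size (h a) = k) -> n < size X -> r < k ->
  nth 0 (morph_apply h X) (k * n + r) = nth 0 (h (nth 0 X n)) r.
Proof.
rewrite /morph_apply.
move=> hk; elim: X n => [|x X IH] [|n] //= Hn Hr.
- by rewrite muln0 add0n nth_cat hk Hr.
- rewrite nth_cat hk ifN; last by rewrite -leqNgt; lia.
  have ->: k * n.+1 + r - k = k * n + r by lia.
  exact: IH.
Qed.

Definition U k := iter k (morph_apply g) [:: 0].

Lemma size_g a : size (g a) = 2.
Proof. by case: a => [|[|[|a]]]. Qed.

Lemma size_U k : size (U k) = 2 ^ k.
Proof.
elim: k => [|k IH] //=. rewrite -/(U k) (size_morph _ size_g) IH expnS //.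
Qed.

Lemma U_prefix k : exists s, U k.+1 = U k ++ s.
Proof.
elim: k => [|k [s Hs]]; first by exists [:: 1].
exists (morph_apply g s).
have ->: U k.+2 = morph_apply g (U k.+1) by [].
by rewrite {1}Hs morph_cat.
Qed.

Lemma U_stable k k' n : k <= k' -> n < size (U k) -> nth 0 (U k') n = nth 0 (U k) n.
Proof.
move=> le; elim: k' le => [|k' IH] le Hn.
  by rewrite leqn0 in le; move/eqP: le => ->.
case: (ltngtP k k'.+1) le => // [lt|->] _ //.
have [s Hs] := U_prefix k'. rewrite Hs nth_cat.
have Hk: k <= k' by [].
have Hs' : n < size (U k') by rewrite !size_U in Hn *; apply: leq_trans Hn _; rewrite leq_exp2l.
by rewrite Hs' IH.
Qed.

Notation u := (fixpt g 0).

Lemma u_U k n : n < 2 ^ k -> u n = nth 0 (U k) n.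
Proof.
move=> Hn. rewrite /fixpt -/(U n.+1).
have H1 : n < size (U n.+1) by rewrite size_U; have := ltn_expl n (isT : 1 < 2); rewrite expnS; lia.
have H2 : n < size (U k) by rewrite size_U.
by rewrite -(@U_stable n.+1 (maxn k n.+1)) ?leq_maxr // -(@U_stable k (maxn k n.+1)) ?leq_maxl.
Qed.

Lemma u_step n r : r < 2 -> u (2 * n + r) = nth 0 (g (u n)) r.
Proof.
move=> Hr.
have Hn : n < 2 ^ n.+1 by have := ltn_expl n (isT : 1 < 2); rewrite expnS; lia.
have H2 : 2 * n + r < 2 ^ n.+2 by rewrite expnS; move: Hn; rewrite expnS; lia.
rewrite (u_U H2) (u_U Hn).
have ->: U n.+2 = morph_apply g (U n.+1) by [].
apply: nth_flatten_unif => //; last by rewrite size_U.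
exact: size_g.
Qed.

Lemma u_div n : u n = nth 0 (g (u (n %/ 2))) (n %% 2).
Proof. have := u_step (n %/ 2) (ltn_pmod n (isT : 0 < 2)). by rewrite mulnC -divn_eq. Qed.

Lemma g_lt4 a r : nth 0 (g a) r < 4.
Proof. by move: a r => [|[|[|a]]] [|[|r]] /=; rewrite ?nth_nil. Qed.

Lemma u_lt4 n : u n < 4.
Proof. by rewrite u_div g_lt4. Qed.

Lemma u0 : u 0 = 0.
Proof. by []. Qed.
Definition FS : seq (seq (seq nat)) := [:: [:: [:: ]];
 [:: [:: 0]; [:: 1]; [:: 2]; [:: 3]];
 [:: [:: 0; 1]; [:: 0; 2]; [:: 1; 2]; [:: 2; 0]; [:: 2; 3]; [:: 3; 0]];
 [:: [:: 0; 1; 2]; [:: 0; 2; 0]; [:: 0; 2; 3]; [:: 1; 2; 0]; [:: 1; 2; 3]; [:: 2; 0; 1]; [:: 2; 0; 2]; [:: 2; 3; 0]; [:: 3; 0; 1]; [:: 3; 0; 2]];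
 [:: [:: 0; 1; 2; 0]; [:: 0; 1; 2; 3]; [:: 0; 2; 0; 1]; [:: 0; 2; 3; 0]; [:: 1; 2; 0; 2]; [:: 1; 2; 3; 0]; [:: 2; 0; 1; 2]; [:: 2; 0; 2; 3]; [:: 2; 3; 0; 1]; [:: 2; 3; 0; 2]; [:: 3; 0; 1; 2]; [:: 3; 0; 2; 0]];
 [:: [:: 0; 1; 2; 0; 2]; [:: 0; 1; 2; 3; 0]; [:: 0; 2; 0; 1; 2]; [:: 0; 2; 3; 0; 1]; [:: 0; 2; 3; 0; 2]; [:: 1; 2; 0; 2; 3]; [:: 1; 2; 3; 0; 1]; [:: 1; 2; 3; 0; 2]; [:: 2; 0; 1; 2; 0]; [:: 2; 0; 1; 2; 3]; [:: 2; 0; 2; 3; 0]; [:: 2; 3; 0; 1; 2]; [:: 2; 3; 0; 2; 0]; [:: 3; 0; 1; 2; 0]; [:: 3; 0; 1; 2; 3]; [:: 3; 0; 2; 0; 1]];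
 [:: [:: 0; 1; 2; 0; 2; 3]; [:: 0; 1; 2; 3; 0; 1]; [:: 0; 1; 2; 3; 0; 2]; [:: 0; 2; 0; 1; 2; 0]; [:: 0; 2; 0; 1; 2; 3]; [:: 0; 2; 3; 0; 1; 2]; [:: 0; 2; 3; 0; 2; 0]; [:: 1; 2; 0; 2; 3; 0]; [:: 1; 2; 3; 0; 1; 2]; [:: 1; 2; 3; 0; 2; 0]; [:: 2; 0; 1; 2; 0; 2]; [:: 2; 0; 1; 2; 3; 0]; [:: 2; 0; 2; 3; 0; 1]; [:: 2; 0; 2; 3; 0; 2]; [:: 2; 3; 0; 1; 2; 0]; [:: 2; 3; 0; 1; 2; 3]; [:: 2; 3; 0; 2; 0; 1]; [:: 3; 0; 1; 2; 0; 2]; [:: 3; 0; 1; 2; 3; 0]; [:: 3; 0; 2; 0; 1; 2]];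
 [:: [:: 0; 1; 2; 0; 2; 3; 0]; [:: 0; 1; 2; 3; 0; 1; 2]; [:: 0; 1; 2; 3; 0; 2; 0]; [:: 0; 2; 0; 1; 2; 0; 2]; [:: 0; 2; 0; 1; 2; 3; 0]; [:: 0; 2; 3; 0; 1; 2; 3]; [:: 0; 2; 3; 0; 2; 0; 1]; [:: 1; 2; 0; 2; 3; 0; 1]; [:: 1; 2; 0; 2; 3; 0; 2]; [:: 1; 2; 3; 0; 1; 2; 0]; [:: 1; 2; 3; 0; 2; 0; 1]; [:: 2; 0; 1; 2; 0; 2; 3]; [:: 2; 0; 1; 2; 3; 0; 1]; [:: 2; 0; 2; 3; 0; 1; 2]; [:: 2; 0; 2; 3; 0; 2; 0]; [:: 2; 3; 0; 1; 2; 0; 2]; [:: 2; 3; 0; 1; 2; 3; 0]; [:: 2; 3; 0; 2; 0; 1; 2]; [:: 3; 0; 1; 2; 0; 2; 3]; [:: 3; 0; 1; 2; 3; 0; 2]; [:: 3; 0; 2; 0; 1; 2; 0]; [:: 3; 0; 2; 0; 1; 2; 3]]].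
Definition clsT : seq nat := [:: 0; 1; 2; 3; 4; 5; 6; 7; 8; 9; 10; 11; 12; 13; 14; 15; 16; 17; 18; 19; 20; 21; 22; 23; 24; 25; 26; 27; 28; 29; 30; 31; 32; 33; 34; 35; 36; 37; 38; 39; 40; 41; 42; 43; 44; 45; 46; 47; 48; 49; 25; 26; 27; 28; 29; 50; 31; 51; 52; 53; 35; 54; 55; 56; 57; 58; 41; 59; 60; 61; 62; 63; 64; 65; 66; 0; 1; 67; 3; 4; 5; 6; 68; 69; 70; 10; 71; 12; 13; 72; 73; 16; 17; 74; 19; 75; 76; 77; 23; 24; 25; 26; 27; 28; 29; 50; 31; 51; 52; 53; 35; 54; 55; 56; 57; 78; 41; 79; 80; 81; 62; 63; 82; 83; 84; 85; 86; 67; 87; 88; 5; 89; 68; 69; 9; 10; 11; 12; 90; 72; 91; 92; 93; 94; 95; 96; 97; 98; 99; 100; 0; 1; 2; 3; 4; 5; 6; 7; 8; 9; 10; 11; 12; 13; 14; 15; 16; 17; 18; 19; 20; 21; 22; 23; 24; 25; 26; 101; 28; 29; 50; 31; 102; 103; 104; 35; 105; 55; 56; 106; 78; 41; 59; 80; 61; 107; 108; 82; 65; 66].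
Definition D0 : seq nat := [:: 0; 2; 4; 6; 8; 10; 12; 14; 16; 18; 20; 22; 24; 26; 28; 30; 32; 34; 36; 38; 40; 42; 44; 46; 48; 25; 27; 29; 31; 52; 35; 55; 57; 41; 60; 62; 64; 66; 1; 3; 5; 68; 70; 71; 13; 73; 17; 19; 76; 23; 35; 57; 41; 80; 82; 84; 86; 87; 5; 9; 11; 90; 91; 93; 95; 97; 99; 4; 14; 16; 18; 22; 28; 30; 36; 40; 42; 44; 5; 9; 11; 90; 95; 97; 99; 0; 2; 6; 8; 12; 26; 50; 102; 104; 105; 56; 78; 59; 61; 108; 65; 29; 57; 41; 80; 82; 87; 91; 93].
Definition D1 : seq nat := [:: 1; 3; 5; 7; 9; 11; 13; 15; 17; 19; 21; 23; 25; 27; 29; 31; 33; 35; 37; 39; 41; 43; 45; 47; 49; 26; 28; 50; 51; 53; 54; 56; 58; 59; 61; 63; 65; 0; 67; 4; 6; 69; 10; 12; 72; 16; 74; 75; 77; 24; 54; 78; 79; 81; 83; 85; 67; 88; 89; 10; 12; 72; 92; 94; 96; 98; 100; 5; 15; 17; 19; 23; 29; 31; 37; 41; 43; 45; 89; 10; 12; 72; 96; 98; 100; 1; 3; 7; 9; 13; 101; 31; 103; 35; 55; 106; 41; 80; 107; 82; 66; 50; 78; 79; 81; 83; 88; 92; 94].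
Definition OB : seq nat := [:: 0; 0; 0; 1; 1; 0; 0; 1; 0; 1; 1; 0; 0; 0; 1; 0; 1; 1; 1; 0; 0; 1; 0; 1; 1; 0; 0; 0; 1; 1; 1; 0; 0; 1; 0; 1; 1; 1; 0; 0; 0; 1; 0; 1; 1; 0; 0; 1; 1; 1; 0; 1; 0; 1; 0; 0; 0; 1; 0; 1; 1; 0; 0; 1; 0; 1; 1; 1; 0; 1; 0; 1; 0; 1; 0; 1; 0; 1; 1; 0; 0; 1; 1; 0; 0; 1; 1; 0; 0; 1; 1; 1; 1; 0; 0; 0; 1; 0; 1; 1; 1; 1; 0; 1; 0; 1; 0; 1; 0].

Definition win (x : nat -> nat) i m := mkseq (fun j => x (i + j)) m.

Lemma nth_win x i m j : j < m -> nth 0 (win x i m) j = x (i + j).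
Proof. by move=> Hj; rewrite /win nth_mkseq. Qed.

Lemma size_win x i m : size (win x i m) = m.
Proof. by rewrite size_mkseq. Qed.

Lemma win_sub k (h : nat -> seq nat) (x y : nat -> nat) :
  0 < k -> (forall a, size (h a) = k) ->
  (forall n, x n = nth 0 (h (y (n %/ k))) (n %% k)) ->
  forall t r L m, r + L <= k * m ->
  win x (k * t + r) L = take L (drop r (morph_apply h (win y t m))).
Proof.
move=> kp hk hx t r L m Hle.
have Hs : size (morph_apply h (win y t m)) = k * m by rewrite (size_morph _ hk) size_win.
apply: (@eq_from_nth _ 0).
  by rewrite size_win size_take size_drop Hs; case: ltnP => //; lia.
move=> j; rewrite size_win => Hj.
rewrite nth_win // nth_take // nth_drop.
have Hq : (r + j) %/ k < m by rewrite ltn_divLR // mulnC; lia.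
rewrite [in RHS](divn_eq (r + j) k) [in RHS]mulnC nth_flatten_unif ?ltn_mod //; last by rewrite size_win.
rewrite nth_win // hx -addnA.
by rewrite [k * t]mulnC divnMDl // modnMDl.
Qed.

Definition fs m := nth [::] FS m.

Definition closure_ok : bool :=
  all (fun m => all (fun e => all (fun f => take m (drop e (morph_apply g f)) \in fs m)
     (fs (e + m).+1./2)) (iota 0 2)) (iota 1 7).

Lemma closure_okT : closure_ok. Proof. by vm_compute. Qed.

Definition base_ok : bool := all (fun m => win u 0 m \in fs m) (iota 1 7).
Lemma base_okT : base_ok. Proof. by vm_compute. Qed.

Lemma fs_win m i : 0 < m <= 7 -> win u i m \in fs m.
Proof.
elim/ltn_ind: i m => i IH m Hm.
case: (posnP i) => [->|ip].
  by move/allP: base_okT => /(_ m); apply; rewrite mem_iota; lia.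
set e := i %% 2. set s := i %/ 2. set m' := (e + m).+1./2.
have Hi : i = 2 * s + e by rewrite /s /e mulnC -divn_eq.
have He : e < 2 by rewrite /e ltn_mod.
have Hm' : 0 < m' <= 7 by rewrite /m'; lia.
have Hsi : s < i by rewrite /s; lia.
rewrite Hi (@win_sub 2 g u u _ size_g u_div s e m m') //; last by rewrite /m'; lia.
have := IH s Hsi m' Hm'.
move/allP: closure_okT => /(_ m); rewrite mem_iota => /(_ ltac:(lia)).
move/allP => /(_ e); rewrite mem_iota => /(_ ltac:(lia)).
move/allP => H1 H2. exact: H1 _ H2.
Qed.

Definition usync_ok : bool :=
  all (fun f1 => all (fun f2 =>
    take 3 (morph_apply g f1) != take 3 (drop 1 (morph_apply g f2))) (fs 2)) (fs 2).
Lemma usync_okT : usync_ok. Proof. by vm_compute. Qed.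

Lemma win_u_at s e m m' : e < 2 -> e + m <= 2 * m' ->
  win u (2 * s + e) m = take m (drop e (morph_apply g (win u s m'))).
Proof. move=> He H; exact: (@win_sub 2 g u u _ size_g u_div s e m m'). Qed.

Lemma usync i j : win u i 3 = win u j 3 -> i %% 2 = j %% 2.
Proof.
have key : forall a b, a %% 2 = 0 -> b %% 2 = 1 -> win u a 3 <> win u b 3.
  move=> a b Ha Hb.
  rewrite (divn_eq a 2) (divn_eq b 2) Ha Hb !(mulnC _ 2).
  rewrite (@win_u_at _ 0 3 2) // (@win_u_at _ 1 3 2) //.
  have F1 := fs_win (a %/ 2) (isT : 0 < 2 <= 7).
  have F2 := fs_win (b %/ 2) (isT : 0 < 2 <= 7).
  move/allP: usync_okT => /(_ _ F1) /allP /(_ _ F2) /eqP; by rewrite drop0.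
move=> E.
have Hi : i %% 2 = 0 \/ i %% 2 = 1 by lia.
have Hj : j %% 2 = 0 \/ j %% 2 = 1 by lia.
case: Hi => [I0|I1]; case: Hj => [J0|J1].
- by rewrite I0 J0.
- by exfalso; apply: (key i j).
- by exfalso; apply: (key j i) => //; rewrite E.
- by rewrite I1 J1.
Qed.

Lemma g_last_inj a b : a < 4 -> b < 4 -> nth 0 (g a) 1 = nth 0 (g b) 1 -> a = b.
Proof. by move: a b => [|[|[|[|a]]]] [|[|[|[|b]]]]. Qed.

Definition sq_small_ok : bool :=
  all (fun p => all (fun f => has (fun j => nth 0 f j != nth 0 f (p + j)) (iota 0 p)) (fs (2 * p))) [:: 1; 2].
Lemma sq_small_okT : sq_small_ok. Proof. by vm_compute. Qed.

Lemma sqfree_u p : 0 < p -> forall i, ~ (forall j, j < p -> u (i + j) = u (i + p + j)).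
Proof.
elim/ltn_ind: p => p IH pp i H.
case: (leqP 3 p) => p3; last first.
  have F := fs_win i (ltac:(lia) : 0 < 2 * p <= 7).
  have Hp : p \in [:: 1; 2] by case: p p3 pp {IH H F} => [|[|[|]]].
  move/allP: sq_small_okT => /(_ p Hp) /allP /(_ _ F) /hasP [j].
  rewrite mem_iota add0n => Hj; rewrite !nth_win; try lia.
  by rewrite H // addnA eqxx.
have E : win u i 3 = win u (i + p) 3.
  apply: (@eq_from_nth _ 0); rewrite ?size_win // => j Hj.
  by rewrite !nth_win // H //; lia.
have Hpe := usync E.
set q := p %/ 2.
have Hp : p = 2 * q by rewrite /q; lia.
apply: (IH q ltac:(lia) ltac:(lia) (i %/ 2)) => j Hj.
apply: g_last_inj; rewrite ?u_lt4 // -!u_step //.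
have Hi := divn_eq i 2. have Hi2 : i %% 2 < 2 by rewrite ltn_mod.
have -> : 2 * (i %/ 2 + j) + 1 = i + (2 * j + 1 - i %% 2) by lia.
have -> : 2 * (i %/ 2 + q + j) + 1 = i + p + (2 * j + 1 - i %% 2) by lia.
apply: H; lia.
Qed.

Definition isBad a b c : bool := (a, b, c) \in [:: (0,2,1); (2,0,3); (1,3,0); (3,1,2)].

Definition ns_small_ok : bool :=
  all (fun p => all (fun f =>
     ~~ (all (fun j => nth 0 f j == nth 0 f (p + j)) (iota 1 p.-1)
         && isBad (nth 0 f 0) (nth 0 f p) (nth 0 f (2 * p)))) (fs (2 * p).+1)) [:: 1; 2; 3].
Lemma ns_small_okT : ns_small_ok. Proof. by vm_compute. Qed.

Definition bad_ok : bool :=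
  all (fun A => all (fun B => all (fun C =>
    isBad (nth 0 (g A) 1) (nth 0 (g B) 1) (nth 0 (g C) 1) ==>
    (nth 0 (g B) 0 == nth 0 (g C) 0) ==> isBad A B C) (iota 0 4)) (iota 0 4)) (iota 0 4).
Lemma bad_okT : bad_ok. Proof. by vm_compute. Qed.

Lemma nearsq_u p : 0 < p -> forall t,
  ~ ((forall j, 0 < j < p -> u (t + j) = u (t + p + j)) /\ isBad (u t) (u (t + p)) (u (t + 2 * p))).
Proof.
elim/ltn_ind: p => p IH pp t [H Hb].
case: (leqP 4 p) => p4; last first.
  have F := fs_win t (ltac:(lia) : 0 < (2 * p).+1 <= 7).
  have Hp : p \in [:: 1; 2; 3] by case: p p4 pp {IH H F Hb} => [|[|[|[|]]]].
  move/allP: ns_small_okT => /(_ p Hp) /allP /(_ _ F) /negP; apply.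
  rewrite !nth_win; try lia.
  rewrite addn0 Hb andbT. apply/allP => j; rewrite mem_iota => Hj.
  rewrite !nth_win; try lia. by rewrite H ?addnA //; lia.
have E : win u (t + 1) 3 = win u (t + 1 + p) 3.
  apply: (@eq_from_nth _ 0); rewrite ?size_win // => j Hj.
  rewrite !nth_win // -!addnA H //; last by lia.
  by rewrite !addnA; congr u; lia.
have Hpe := usync E.
set q := p %/ 2.
have Hp : p = 2 * q by rewrite /q; lia.
have Ht := divn_eq t 2. have Ht2 : t %% 2 < 2 by rewrite ltn_mod.
set s := t %/ 2.
have [T0|T1] : t %% 2 = 0 \/ t %% 2 = 1 by lia.
- apply: (@sqfree_u q ltac:(lia) s) => j Hj.
  apply: g_last_inj; rewrite ?u_lt4 // -!u_step //.
  have -> : 2 * (s + j) + 1 = t + (2 * j + 1) by rewrite /s; lia.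
  have -> : 2 * (s + q + j) + 1 = t + p + (2 * j + 1) by rewrite /s; lia.
  apply: H; lia.
- apply: (IH q ltac:(lia) ltac:(lia) s); split.
    move=> j Hj.
    apply: g_last_inj; rewrite ?u_lt4 // -!u_step //.
    have -> : 2 * (s + j) + 1 = t + 2 * j by rewrite /s; lia.
    have -> : 2 * (s + q + j) + 1 = t + p + 2 * j by rewrite /s; lia.
    apply: H; lia.
  have HA : u t = nth 0 (g (u s)) 1 by rewrite -u_step // /s; congr u; lia.
  have HB : u (t + p) = nth 0 (g (u (s + q))) 1 by rewrite -u_step // /s; congr u; lia.
  have HC : u (t + 2 * p) = nth 0 (g (u (s + 2 * q))) 1 by rewrite -u_step // /s; congr u; lia.
  have HF : nth 0 (g (u (s + q))) 0 = nth 0 (g (u (s + 2 * q))) 0.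
    rewrite -!u_step //.
    have -> : 2 * (s + q) + 0 = t + (p - 1) by rewrite /s; lia.
    have -> : 2 * (s + 2 * q) + 0 = t + p + (p - 1) by rewrite /s; lia.
    apply: H; lia.
  rewrite HA HB HC in Hb.
  have LA := u_lt4 s. have LB := u_lt4 (s + q). have LC := u_lt4 (s + 2 * q).
  move/allP: bad_okT => /(_ (u s)); rewrite mem_iota => /(_ ltac:(lia)) /allP.
  move=> /(_ (u (s + q))); rewrite mem_iota => /(_ ltac:(lia)) /allP.
  move=> /(_ (u (s + 2 * q))); rewrite mem_iota => /(_ ltac:(lia)).
  by rewrite Hb HF eqxx.
Qed.

Definition W := morph_inf sigma vtm.

Lemma size_sigma a : size (sigma a) = 50.
Proof. by case: a => [|[|a]]. Qed.

Lemma w_sigma n : W n = nth 0 (sigma (vtm (n %/ 50))) (n %% 50).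
Proof.
have Hq : n %/ 50 < n.+1 by rewrite ltnS leq_div.
have := @nth_flatten_unif sigma 50 (mkseq vtm n.+1) (n %/ 50) (n %% 50) size_sigma.
rewrite size_mkseq nth_mkseq // mulnC -divn_eq /W /morph_inf => ->; rewrite ?ltn_mod //.
Qed.

Definition H a := morph_apply sigma (map tau (g a)).

Lemma size_H a : size (H a) = 100.
Proof. by case: a => [|[|[|a]]]. Qed.

Lemma w_H n : W n = nth 0 (H (u (n %/ 100))) (n %% 100).
Proof.
rewrite w_sigma /vtm u_div /H.
have := @nth_flatten_unif sigma 50 (map tau (g (u (n %/ 100)))) ((n %% 100) %/ 50) ((n %% 100) %% 50) size_sigma.
rewrite size_map size_g mulnC -divn_eq => ->; rewrite ?ltn_mod //; last by lia.
rewrite (nth_map 0); last by rewrite size_g; lia.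
have -> : n %/ 50 %/ 2 = n %/ 100 by lia.
have -> : n %/ 50 %% 2 = n %% 100 %/ 50 by lia.
by have -> : n %% 100 %% 50 = n %% 50 by lia.
Qed.

Lemma win_w_at t r L m : r + L <= 100 * m ->
  win W (100 * t + r) L = take L (drop r (morph_apply H (win u t m))).
Proof. move=> Hl; exact: (@win_sub 100 H W u _ size_H w_H t r L m). Qed.

Definition H3 := [seq morph_apply H f | f <- fs 3].

Definition wsync_ok : bool :=
  all (fun x1 => all (fun x2 => all (fun r1 => all (fun r2 =>
     (r1 == r2) || (take 135 (drop r1 x1) != take 135 (drop r2 x2))) (iota 0 100)) (iota 0 100)) H3) H3.
Lemma wsync_okT : wsync_ok. Proof. by vm_compute. Qed.

Lemma wsync i j : win W i 135 = win W j 135 -> i %% 100 = j %% 100.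
Proof.
rewrite (divn_eq i 100) (divn_eq j 100) !(mulnC _ 100).
rewrite (@win_w_at _ _ 135 3); last by have := ltn_pmod i (isT : 0 < 100); lia.
rewrite (@win_w_at _ _ 135 3); last by have := ltn_pmod j (isT : 0 < 100); lia.
move=> E.
have F1 := fs_win (i %/ 100) (isT : 0 < 3 <= 7).
have F2 := fs_win (j %/ 100) (isT : 0 < 3 <= 7).
have M1 : morph_apply H (win u (i %/ 100) 3) \in H3 by apply: map_f.
have M2 : morph_apply H (win u (j %/ 100) 3) \in H3 by apply: map_f.
move/allP: wsync_okT => /(_ _ M1) /allP /(_ _ M2) /allP /(_ (i %% 100)).
rewrite mem_iota ltn_mod => /(_ isT) /allP /(_ (j %% 100)).
rewrite mem_iota ltn_mod E eqxx orbF => /(_ isT) /eqP Heq.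
lia.
Qed.

Definition Sq : seq (seq nat) := [:: [:: 0; 0]; [:: 1; 1]; [:: 0; 1; 0; 1]].

Definition H4 := [seq morph_apply H f | f <- fs 4].

Definition wsmall_ok : bool :=
  all (fun x => all (fun r => all (fun p =>
     let y := take (2 * p) (drop r x) in (take p y != drop p y) || (y \in Sq))
     (iota 1 134)) (iota 0 100)) H4.
Lemma wsmall_okT : wsmall_ok. Proof. by vm_compute. Qed.

Lemma w_small p i : 0 < p < 135 -> (forall j, j < p -> W (i + j) = W (i + p + j)) ->
  win W i (2 * p) \in Sq.
Proof.
move=> Hp H0.
have Ey : take p (win W i (2 * p)) = drop p (win W i (2 * p)).
  have Hsz : size (take p (win W i (2 * p))) = p.
    apply: size_takel; rewrite size_win; lia.
  apply: (@eq_from_nth _ 0).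
    rewrite Hsz size_drop size_win; lia.
  move=> j; rewrite Hsz => Hj.
  have Hj' : j < p by [].
  rewrite nth_take // nth_drop !nth_win; try lia.
  by rewrite H0 // addnA.
have Hr := ltn_pmod i (isT : 0 < 100).
move: Ey; rewrite (divn_eq i 100) mulnC (@win_w_at _ _ _ 4); last by lia.
move=> Ey.
have F := fs_win (i %/ 100) (isT : 0 < 4 <= 7).
have M : morph_apply H (win u (i %/ 100) 4) \in H4 by apply: map_f.
move/allP: wsmall_okT => /(_ _ M) /allP /(_ (i %% 100)).
rewrite mem_iota Hr => /(_ isT) /allP /(_ p).
rewrite mem_iota => /(_ ltac:(lia)) /=.
by rewrite Ey eqxx.
Qed.

Lemma H_inj a b : a < 4 -> b < 4 -> H a = H b -> a = b.
Proof. by move: a b => [|[|[|[|a]]]] [|[|[|[|b]]]]. Qed.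

Definition tri_ok : bool :=
  all (fun a => all (fun b => all (fun c => all (fun r =>
    [&& a != b, b != c, drop r (H a) == drop r (H b) & take r (H b) == take r (H c)] ==> isBad a b c)
    (iota 1 99)) (iota 0 4)) (iota 0 4)) (iota 0 4).
Lemma tri_okT : tri_ok. Proof. by vm_compute. Qed.

Lemma w_block t : H (u t) = win W (100 * t) 100.
Proof.
rewrite -[100 * t]addn0 (@win_w_at t 0 100 1) // drop0.
have -> : win u t 1 = [:: u t] by rewrite /win /mkseq /= addn0.
by rewrite /morph_apply /= cats0 take_oversize // size_H.
Qed.

Lemma w_large p i : 135 <= p -> ~ (forall j, j < p -> W (i + j) = W (i + p + j)).
Proof.
move=> Hp H0.
have E : win W i 135 = win W (i + p) 135.
  apply: (@eq_from_nth _ 0); rewrite ?size_win // => j Hj.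
  by rewrite !nth_win // H0 //; lia.
have Hpe := wsync E.
set q := p %/ 100. set t := i %/ 100. set r := i %% 100.
have Hpq : p = 100 * q by rewrite /q; lia.
have Hi : i = 100 * t + r by rewrite /t /r; lia.
have Hr : r < 100 by rewrite /r ltn_mod.
have Hq : 1 < q by lia.
have Wi : forall k, W k = W (k + p) -> W k = W (k + p) by [].
have Blk : forall j, 0 < j < q -> u (t + j) = u (t + q + j).
  move=> j Hj; apply: H_inj; rewrite ?u_lt4 //.
  rewrite !w_block; apply: (@eq_from_nth _ 0); rewrite ?size_win // => k Hk.
  rewrite !nth_win //.
  have -> : 100 * (t + j) + k = i + (100 * j - r + k) by lia.
  have -> : 100 * (t + q + j) + k = i + p + (100 * j - r + k) by lia.
  apply: H0; lia.
have sq0 := @sqfree_u q ltac:(lia).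
have [r0|rp] := posnP r.
  apply: (sq0 t) => j Hj.
  case: (posnP j) => [->|jp]; last by apply: Blk; lia.
  apply: H_inj; rewrite ?u_lt4 //.
  rewrite !w_block; apply: (@eq_from_nth _ 0); rewrite ?size_win // => k Hk.
  rewrite !nth_win //.
  have -> : 100 * (t + 0) + k = i + k by lia.
  have -> : 100 * (t + q + 0) + k = i + p + k by lia.
  apply: H0; lia.
set a := u t. set b := u (t + q). set c := u (t + 2 * q).
have [eab|nab] := eqVneq a b.
  apply: (sq0 t) => j Hj.
  case: (posnP j) => [->|jp]; last by apply: Blk; lia.
  by rewrite !addn0.
have [ebc|nbc] := eqVneq b c.
  apply: (sq0 t.+1) => j Hj.
  case: (ltnP j q.-1) => Hj'.
    have := Blk j.+1 ltac:(lia). by rewrite !addnS !addSn.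
  have -> : t.+1 + j = t + q by lia.
  have -> : t.+1 + q + j = t + 2 * q by lia.
  exact: ebc.
have D : drop r (H a) = drop r (H b).
  apply: (@eq_from_nth _ 0); rewrite ?size_drop ?size_H // => k Hk.
  rewrite !nth_drop /a /b !w_block !nth_win; try lia.
  have -> : 100 * t + (r + k) = i + k by lia.
  have -> : 100 * (t + q) + (r + k) = i + p + k by lia.
  apply: H0; lia.
have T : take r (H b) = take r (H c).
  have Hs : forall x, size (take r (H x)) = r by move=> x; rewrite size_takel // size_H; lia.
  apply: (@eq_from_nth _ 0); rewrite ?Hs // => k Hk.
  rewrite !nth_take // /b /c !w_block !nth_win; try lia.
  have -> : 100 * (t + q) + k = i + (p - r + k) by lia.
  have -> : 100 * (t + 2 * q) + k = i + p + (p - r + k) by lia.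
  apply: H0; lia.
have Bad : isBad a b c.
  have La := u_lt4 t. have Lb := u_lt4 (t + q). have Lc := u_lt4 (t + 2 * q).
  move/allP: tri_okT => /(_ a); rewrite mem_iota => /(_ ltac:(lia)) /allP.
  move=> /(_ b); rewrite mem_iota => /(_ ltac:(lia)) /allP.
  move=> /(_ c); rewrite mem_iota => /(_ ltac:(lia)) /allP.
  move=> /(_ r); rewrite mem_iota => /(_ ltac:(lia)).
  by rewrite nab nbc D T !eqxx.
apply: (@nearsq_u q ltac:(lia) t); split => //.
Qed.

Lemma base_repr_step n : 0 < n -> base_repr 2 n = rcons (base_repr 2 (n %/ 2)) (n %% 2).
Proof.
move=> np.
case: (ltnP n 2) => n2.
  have -> : n = 1 by lia. by [].
rewrite /base_repr.
have -> : (n == 0) = false by apply/eqP; lia.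
have -> : (n %/ 2 == 0) = false by apply/eqP; lia.
rewrite trunc_log2S // -divn2.
rewrite (_ : iota 0 (trunc_log 2 (n %/ 2)).+2 = 0 :: iota 1 (trunc_log 2 (n %/ 2)).+1) // map_cons rev_cons expn0 divn1.
congr (rcons (rev _) _).
rewrite (_ : iota 1 _ = map (addn 1) (iota 0 (trunc_log 2 (n %/ 2)).+1)); last by rewrite -iotaDl.
rewrite -map_comp; apply: eq_map => i /=.
by rewrite add1n expnS divnMA.
Qed.

Definition deltaA (c d : nat) : nat :=
  let x := 2 * (c %% 50) + d in 50 * nth 0 (g (c %/ 50)) (x %/ 50) + x %% 50.
Definition outA (c : nat) : nat := nth 0 (sigma (tau (c %/ 50))) (c %% 50).
Definition cl (c : nat) : nat := nth 0 clsT c.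
Definition DB (q d : nat) : nat := nth 0 (if d == 0 then D0 else D1) q.

Definition dfa_ok : bool :=
  all (fun c => [&& cl c < 109, nth 0 OB (cl c) == outA c &
     all (fun d => cl (deltaA c d) == DB (cl c) d) [:: 0; 1]]) (iota 0 200).
Lemma dfa_okT : dfa_ok. Proof. by vm_compute. Qed.

Definition code n := 50 * u (n %/ 50) + n %% 50.

Lemma code_lt n : code n < 200.
Proof. have := u_lt4 (n %/ 50); have := ltn_pmod n (isT : 0 < 50); rewrite /code; lia. Qed.

Lemma code_step n : 0 < n -> code n = deltaA (code (n %/ 2)) (n %% 2).
Proof.
move=> np. rewrite /deltaA /code.
have L := u_lt4 (n %/ 2 %/ 50).
have M := ltn_pmod (n %/ 2) (isT : 0 < 50).
have -> : (50 * u (n %/ 2 %/ 50) + n %/ 2 %% 50) %/ 50 = u (n %/ 2 %/ 50) by lia.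
have -> : (50 * u (n %/ 2 %/ 50) + n %/ 2 %% 50) %% 50 = n %/ 2 %% 50 by lia.
rewrite -u_step; last by lia.
congr (50 * u _ + _); lia.
Qed.

Definition dq0 : 'I_109 := inord (cl 0).
Definition ddelta (q : 'I_109) (d : nat) : 'I_109 := inord (DB q d).
Definition dout (q : 'I_109) : nat := nth 0 OB q.

Lemma cl_ok c : c < 200 -> [&& cl c < 109, nth 0 OB (cl c) == outA c &
     all (fun d => cl (deltaA c d) == DB (cl c) d) [:: 0; 1]].
Proof. by move=> Hc; move/allP: dfa_okT => /(_ c); rewrite mem_iota; apply; lia. Qed.

Lemma dfa_run n : val (foldl ddelta dq0 (base_repr 2 n)) = cl (code n).
Proof.
elim/ltn_ind: n => n IH.
case: (posnP n) => [->|np].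
  have -> : code 0 = 0 by rewrite /code u0.
  have -> : base_repr 2 0 = [::] by [].
  rewrite /dq0 /= inordK //.
rewrite base_repr_step // -cats1 foldl_cat /= /ddelta inordK; last first.
  rewrite IH; last by lia.
  have /and3P [_ _ /allP A] := cl_ok (code_lt (n %/ 2)).
  have Hd : n %% 2 \in [:: 0; 1] by have := ltn_pmod n (isT : 0 < 2); case: (n %% 2) => [|[|]].
  move/eqP: (A _ Hd) => <-.
  by rewrite -(@code_step n np); have /and3P [Hc1 _ _] := cl_ok (code_lt n).
rewrite IH; last by lia.
have /and3P [_ _ /allP A] := cl_ok (code_lt (n %/ 2)).
have Hd : n %% 2 \in [:: 0; 1] by have := ltn_pmod n (isT : 0 < 2); case: (n %% 2) => [|[|]].
by move/eqP: (A _ Hd) => <-; rewrite (@code_step n np).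
Qed.

Lemma dfa_gen : generated_by_DFAO 2 109 W.
Proof.
exists dq0, ddelta, dout => n.
rewrite /dout dfa_run.
have /and3P [_ /eqP -> _] := cl_ok (code_lt n).
rewrite w_sigma /outA /code /vtm.
have M := ltn_pmod n (isT : 0 < 50). have L := u_lt4 (n %/ 50).
have -> : (50 * u (n %/ 50) + n %% 50) %/ 50 = u (n %/ 50) by lia.
by have -> : (50 * u (n %/ 50) + n %% 50) %% 50 = n %% 50 by lia.
Qed.

End Aux.

Theorem theorem2 :
  let w := morph_inf sigma vtm in
  automatic 2 w /\
  (exists S : seq (seq nat),
      uniq S /\ size S = 3 /\
      forall u, (is_square u /\ factor_of u w) <-> u \in S) /\
  generated_by_DFAO 2 109 w.
Proof.
move=> w.
have Gen : generated_by_DFAO 2 109 w := Aux.dfa_gen.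
split; first by exists 109.
split; last exact: Gen.
exists Aux.Sq; split; first by []. split; first by [].
move=> x; split.
- move=> [[y [yn ->]] [i Hi]].
  set p := size y.
  have yp : 0 < p by rewrite /p lt0n size_eq0.
  have H0 : forall j, j < p -> Aux.W (i + j) = Aux.W (i + p + j).
    move=> j Hj.
    have E1 := Hi j ltac:(rewrite size_cat; lia).
    have E2 := Hi (p + j) ltac:(rewrite size_cat; lia).
    rewrite /w in E1 E2. rewrite /Aux.W E1 -addnA E2 !nth_cat -/p Hj.
    by rewrite ifN ?addKn //; lia.
  case: (ltnP p 135) => Hp.
    have := @Aux.w_small p i ltac:(lia) H0.
    have -> : Aux.win Aux.W i (2 * p) = y ++ y; last by [].
    apply: (@eq_from_nth _ 0); rewrite Aux.size_win ?size_cat -/p; first lia.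
    move=> j Hj; rewrite Aux.nth_win //; apply: Hi; rewrite size_cat; lia.
  by exfalso; apply: (@Aux.w_large p i Hp H0).
- rewrite !inE => /or3P [] /eqP ->.
  + split; first by exists [:: 0].
    exists 0 => j; case: j => [|[|j]] // _; by vm_compute.
  + split; first by exists [:: 1].
    exists 3 => j; case: j => [|[|j]] // _; by vm_compute.
  + split; first by exists [:: 0; 1].
    exists 6 => j; case: j => [|[|[|[|j]]]] // _; by vm_compute.
Qed.
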